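(* For any basic categorized domain with $p\geq 2$, any strategy-proof, non-bossy, and category-wise neutral allocation mechanism is Pareto optimal.
   Context: Basic categorized domain: $n$ agents $\{1,\ldots,n\}$, $p$ categories $D_i=\{1,\ldots,n\}$ of indivisible items, bundles $\mathfrak D=D_1\times\cdots\times D_p$, $[\vec d]_i$ the $i$-th component. Each agent $j$ has a linear order $R_j$ over $\mathfrak D$; a profile is $P=(R_1,\ldots,R_n)$ and $(R_j',R_{-j})$ replaces $R_j$ by $R_j'$. An allocation is a map $A:\{1,\ldots,n\}\to\mathfrak D$ with $\{[A(1)]_i,\ldots,[A(n)]_i\}=D_i$ for each $i$. An allocation mechanism $f$ maps profiles to allocations; $f^j(P)$ is agent $j$'s bundle. Strategy-proofness: for all $P,j,R_j'$, $f^j(P)$ is ranked weakly above $f^j(R_j',R_{-j})$ in $R_j$. Non-bossiness: for all $P,j,R_j'$, if $f^j(P)=f^j(R_j',R_{-j})$ then $f(P)=f(R_j',R_{-j})$. Category-wise neutrality: for all $P$, categories $i$ and permutations $M_i$ of $D_i$, $f(M_i(P))=M_i(f(P))$, where $M_i(\vec d)=(M_i([\vec d]_i),[\vec d]_{-i})$ on bundles, extended to linear orders by relabeling bundles, to profiles componentwise, and to allocations by applying it to each agent's bundle. Pareto optimality: for every profile $P$ there is no allocation $A$ such that every agent $j$ ranks $A(j)$ weakly above $f^j(P)$ in $R_j$ and at least one agent ranks $A(j)$ strictly above $f^j(P)$. *)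

(* Defs.v *)
From mathcomp Require Import all_boot all_fingroup.
Set Implicit Arguments. Unset Strict Implicit. Unset Printing Implicit Defensive.

(* Agents are 'I_n, categories are 'I_p, items of each category D_i are 'I_n. *)
Definition bundle (n p : nat) := {ffun 'I_p -> 'I_n}.

(* A linear order over a finite type; [lo R a b] means "a is ranked weakly
   above b in R" (a R b). *)
Record linord (B : finType) := LinOrd {
  lo :> rel B;
  lo_refl : reflexive lo;
  lo_anti : antisymmetric lo;
  lo_trans : transitive lo;
  lo_total : total lo }.

Definition profile (n p : nat) := 'I_n -> linord (bundle n p).

Definition allocation (n p : nat) := {ffun 'I_n -> bundle n p}.

Definition is_allocation n p (A : allocation n p) : Prop :=
  forall i : 'I_p, [set A j i | j : 'I_n] = [set: 'I_n].

Definition is_mechanism n p (f : profile n p -> allocation n p) : Prop :=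
  forall P, is_allocation (f P).

Definition upd n p (P : profile n p) (j : 'I_n) (R' : linord (bundle n p))
  : profile n p := fun k => if k == j then R' else P k.

Definition strategy_proof n p (f : profile n p -> allocation n p) : Prop :=
  forall (P : profile n p) (j : 'I_n) (R' : linord (bundle n p)),
    P j (f P j) (f (upd P j R') j).

Definition non_bossy n p (f : profile n p -> allocation n p) : Prop :=
  forall (P : profile n p) (j : 'I_n) (R' : linord (bundle n p)),
    f P j = f (upd P j R') j -> f P = f (upd P j R').

Definition bmap n p (i : 'I_p) (M : {perm 'I_n}) (d : bundle n p) : bundle n p :=
  [ffun k => if k == i then M (d k) else d k].

Lemma bmapK n p (i : 'I_p) (M : {perm 'I_n}) :
  cancel (bmap i M) (bmap i M^-1).
Proof.
move=> d; apply/ffunP => k; rewrite !ffunE.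
by case: (k == i) => //; rewrite permK.
Qed.

Lemma bmapKV n p (i : 'I_p) (M : {perm 'I_n}) :
  cancel (bmap i M^-1) (bmap i M).
Proof.
move=> d; apply/ffunP => k; rewrite !ffunE.
by case: (k == i) => //; rewrite permKV.
Qed.

Definition rmap_rel n p (i : 'I_p) (M : {perm 'I_n}) (R : linord (bundle n p))
  : rel (bundle n p) := fun x y => R (bmap i M^-1 x) (bmap i M^-1 y).

Lemma rmap_refl n p i M (R : linord (bundle n p)) : reflexive (rmap_rel i M R).
Proof. by move=> x; apply: lo_refl. Qed.

Lemma rmap_anti n p i M (R : linord (bundle n p)) : antisymmetric (rmap_rel i M R).
Proof.
move=> x y H; have := lo_anti H => E.
by rewrite -(bmapKV i M x) E bmapKV.
Qed.

Lemma rmap_trans n p i M (R : linord (bundle n p)) : transitive (rmap_rel i M R).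
Proof. by move=> y x z; apply: lo_trans. Qed.

Lemma rmap_total n p i M (R : linord (bundle n p)) : total (rmap_rel i M R).
Proof. by move=> x y; apply: lo_total. Qed.

Definition rmap n p (i : 'I_p) (M : {perm 'I_n}) (R : linord (bundle n p))
  : linord (bundle n p) :=
  LinOrd (@rmap_refl n p i M R) (@rmap_anti n p i M R)
         (@rmap_trans n p i M R) (@rmap_total n p i M R).

Definition pmap n p (i : 'I_p) (M : {perm 'I_n}) (P : profile n p) : profile n p :=
  fun j => rmap i M (P j).

Definition amap n p (i : 'I_p) (M : {perm 'I_n}) (A : allocation n p)
  : allocation n p := [ffun j => bmap i M (A j)].

Definition category_wise_neutral n p (f : profile n p -> allocation n p) : Prop :=
  forall (P : profile n p) (i : 'I_p) (M : {perm 'I_n}),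
    f (pmap i M P) = amap i M (f P).

Definition pareto_optimal n p (f : profile n p -> allocation n p) : Prop :=
  forall P : profile n p,
    ~ exists A : allocation n p,
        [/\ is_allocation A,
            (forall j, P j (A j) (f P j)) &
            (exists j, P j (A j) (f P j) && (A j != f P j))].

(* Main.v *)
Require Import Defs.
From mathcomp Require Import all_boot all_fingroup.
From Stdlib Require Import FunctionalExtensionality.
Set Implicit Arguments. Unset Strict Implicit. Unset Printing Implicit Defensive.

Section Top.
Variables (B : finType) (R : linord B) (a : B).
Definition trel : rel B := fun x y => (x == a) || ((y != a) && R x y).
Lemma trel_refl : reflexive trel.
Proof. by move=> x; rewrite /trel lo_refl andbT; case: (x == a). Qed.
Lemma trel_anti : antisymmetric trel.
Proof.
move=> x y; rewrite /trel.
case: (eqVneq x a) => [->|xa]; case: (eqVneq y a) => [->|ya] //=.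
by move/lo_anti.
Qed.
Lemma trel_trans : transitive trel.
Proof.
move=> y x z; rewrite /trel.
case: (eqVneq x a) => [->|xa] //=; case: (eqVneq y a) => [->|ya] //=.
case: (eqVneq z a) => [->|za] //=.
exact: lo_trans.
Qed.
Lemma trel_total : total trel.
Proof.
move=> x y; rewrite /trel.
case: (eqVneq x a) => [->|xa] //=; case: (eqVneq y a) => [->|ya] //=.
exact: lo_total.
Qed.
Definition topify : linord B := LinOrd trel_refl trel_anti trel_trans trel_total.
Lemma topify_top y : topify a y.
Proof. by rewrite /= /trel eqxx. Qed.
End Top.

Section Main.
Variables (n p : nat) (f : profile n p -> allocation n p).
Hypothesis SP : strategy_proof f.
Hypothesis NB : non_bossy f.

Lemma upd_upd (P : profile n p) k R' : upd (upd P k R') k (P k) = P.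
Proof.
apply: functional_extensionality => j; rewrite /upd.
by case: (eqVneq j k) => [->|].
Qed.

Lemma step (R : profile n p) k (R' : linord (bundle n p)) :
  (forall y, R k (f R k) y -> R' (f R k) y) -> f (upd R k R') = f R.
Proof.
move=> H.
have h1 := SP R k R'.
have h2 := SP (upd R k R') k (R k).
rewrite upd_upd /upd eqxx in h2.
have E : f (upd R k R') k = f R k.
  by apply: (@lo_anti _ R'); rewrite h2 H.
by symmetry; apply: NB; rewrite E.
Qed.

Lemma mono (R R'' : profile n p) :
  (forall k y, R k (f R k) y -> R'' k (f R k) y) -> f R'' = f R.
Proof.
move=> H.
pose mix m : profile n p := fun k => if k < m then R'' k else R k.
have Hm : forall m, f (mix m) = f R.
  elim=> [|m IH].
    by congr f; apply: functional_extensionality => k.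
  case: (ltnP m n) => mn.
    pose k := Ordinal mn.
    have -> : mix m.+1 = upd (mix m) k (R'' k).
      apply: functional_extensionality => j; rewrite /mix /upd.
      case: (eqVneq j k) => [->|jk].
        by rewrite /= ltnSn.

      rewrite ltnS leq_eqVlt.
      have -> : (nat_of_ord j == m) = false.
        by apply/negbTE; apply: contra jk => /eqP e; apply/eqP/val_inj.
      by [].
    rewrite step // IH => y.
    by rewrite /mix /= ltnn; apply: H.
  rewrite -IH; congr f; apply: functional_extensionality => j.
  rewrite /mix; have jn := ltn_ord j.
  by rewrite (leq_trans jn mn) (leq_trans jn (leq_trans mn (leqnSn m))).
rewrite -(Hm n); congr f; apply: functional_extensionality => j.
by rewrite /mix ltn_ord.
Qed.
End Main.

Lemma alloc_inj n p (A : allocation n p) i :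
  is_allocation A -> injective (fun j => A j i).
Proof.
move=> /(_ i) H.
have /imset_injP inj : #|[set A j i | j : 'I_n]| == #|'I_n|.
  by rewrite H cardsT.
by move=> x y; apply: inj.
Qed.

Lemma col_perm n p (A B : allocation n p) i :
  is_allocation A -> is_allocation B ->
  exists M : {perm 'I_n}, forall j, M (B j i) = A j i.
Proof.
move=> HA HB.
have iA := alloc_inj (i:=i) HA; have iB := alloc_inj (i:=i) HB.
have inj : injective (fun x => A (invF iB x) i).
  by move=> x y /iA E; apply: (can_inj (f_invF iB)).
exists (perm inj) => j; rewrite permE /=.
congr (A _ i); apply: (iB); exact: (f_invF iB).
Qed.

Lemma range n p (f : profile n p -> allocation n p) :
  is_mechanism f -> category_wise_neutral f ->
  forall (P : profile n p) (A : allocation n p), is_allocation A ->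
  exists R, f R = A.
Proof.
move=> Hm CN P A HA.
have Hk : forall m, m <= p -> exists R,
    f R = [ffun j => [ffun k : 'I_p => if k < m then A j k else f P j k]].
  elim=> [|m IH] mp.
    exists P; apply/ffunP => j; apply/ffunP => k; by rewrite !ffunE.
  have [R HR] := IH (ltnW mp).
  pose i := Ordinal mp.
  have [M HM] := col_perm i HA (Hm R).
  exists (Defs.pmap i M R); rewrite CN HR.
  apply/ffunP => j; apply/ffunP => k; rewrite !ffunE.
  case: (eqVneq k i) => [->|ki].
    rewrite /= ltnSn ltnn.
    have := HM j; rewrite HR !ffunE /= ltnn => ->; by [].
  have km : (nat_of_ord k == m) = false.
    by apply/negbTE; apply: contra ki => /eqP e; apply/eqP/val_inj.
  by rewrite ltnS [k <= m]leq_eqVlt km.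
have [R HR] := Hk p (leqnn p); exists R; rewrite HR.
apply/ffunP => j; apply/ffunP => k; by rewrite !ffunE ltn_ord.
Qed.

Theorem lemma3 (n p : nat) (f : profile n p -> allocation n p) :
  2 <= p ->
  is_mechanism f ->
  strategy_proof f ->
  non_bossy f ->
  category_wise_neutral f ->
  pareto_optimal f.
Proof.
move=> _ Hm SP NB CN P [A [HA Hdom [j /andP [Hj Hne]]]].
pose P' : profile n p := fun k => topify (topify (P k) (f P k)) (A k).
have E1 : f P' = f P.
  apply: (mono SP NB) => k y Hy.
  rewrite /P' /= /trel /= /trel eqxx /= andbT orbC.
  apply/orP; have [E|Hk] := eqVneq (f P k) (A k); [by right; apply/eqP|left].
  apply/eqP => Ey.
  move: Hy; rewrite Ey => Hy.
  case/eqP: Hk; apply: (@lo_anti _ (P k)); by rewrite Hy Hdom.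
have [R HR] := range Hm CN P HA.
have E2 : f P' = A.
  rewrite -HR; apply: (mono SP NB) => k y _; rewrite HR; exact: topify_top.
by move: Hne; rewrite -E1 E2 eqxx.
Qed.
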